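(* For every positive integer $d$, there exist infinitely many monic rigid Carmichael polynomials of order $d$ in $\mathbb{F}_q[t]$.
   Context: $\mathbb{F}_q$ is the finite field with $q$ elements. For an integer $d\ge1$, a rigid Carmichael polynomial of order $d$ in $\mathbb{F}_q[t]$ is a reducible square-free polynomial $g\in\mathbb{F}_q[t]$ such that $i\cdot\deg P$ divides $d\cdot\deg g$ for every irreducible polynomial $P$ dividing $g$ and every $i=1,\dots,d$. *)

(* Defs.v *)
From HB Require Import structures.
From mathcomp Require Import all_boot all_order all_algebra all_field.
Set Implicit Arguments. Unset Strict Implicit. Unset Printing Implicit Defensive.
Import GRing.Theory.
Local Open Scope ring_scope.

Definition reducible_poly (F : fieldType) (g : {poly F}) : Prop :=
  (1 < size g)%N /\ ~ irreducible_poly g.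

(* square-free: no square of a non-constant polynomial divides g
   (this excludes g = 0) *)
Definition squarefree_poly (F : fieldType) (g : {poly F}) : Prop :=
  forall h : {poly F}, h * h %| g -> (size h <= 1)%N.

Definition rigid_carmichael (F : fieldType) (d : nat) (g : {poly F}) : Prop :=
  [/\ reducible_poly g, squarefree_poly g &
      forall P : {poly F}, irreducible_poly P -> P %| g ->
        forall i : nat, (1 <= i <= d)%N ->
          (i * (size P).-1 %| d * (size g).-1)%N ].

(* Main.v *)
From HB Require Import structures.
From mathcomp Require Import all_boot all_order all_algebra all_field all_fingroup all_solvable.
From mathcomp Require Import ring zify.
Require Import Defs.
From Stdlib Require Import Classical_Prop.
Set Implicit Arguments. Unset Strict Implicit. Unset Printing Implicit Defensive.
Import GRing.Theory.
Local Open Scope ring_scope.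
Lemma qnat (F : finFieldType) : [pchar F].-nat #|F|.
Proof.
have [p pr pc] := finPcharP F.
have := abelem_pgroup (fin_ring_pchar_abelem pc).
rewrite /pgroup cardsT => H.
by rewrite (eq_pnat _ (pcharf_eq pc)).
Qed.

Lemma qnatX (F : finFieldType) n : [pchar {poly F}].-nat (#|F| ^ n)%N.
Proof.
rewrite (eq_pnat _ (@pchar_poly F)) pnatX; apply/orP; left; exact: qnat.
Qed.

Lemma expf_cardX (F : finFieldType) n (c : F) : c ^+ (#|F| ^ n)%N = c.
Proof.
elim: n => [|n IH]; first by rewrite expr1.
by rewrite expnSr exprM IH expf_card.
Qed.

Lemma frobX (F : finFieldType) n (h : {poly F}) :
  h ^+ (#|F| ^ n)%N = h \Po 'X^(#|F| ^ n)%N.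
Proof.
elim/poly_ind: h => [|h c IH]; first by rewrite comp_poly0 expr0n expn_eq0 /=; case: eqP => // H; have := finNzRing_gt1 F; rewrite H.
rewrite exprDn_pchar ?qnatX // exprMn IH -polyC_exp expf_cardX.
by rewrite comp_polyD comp_polyM comp_polyX comp_polyC.
Qed.

Lemma dvdp_comp_sub (F : fieldType) (a b h : {poly F}) :
  (a - b) %| ((h \Po a) - (h \Po b)).
Proof.
elim/poly_ind: h => [|h c IH]; first by rewrite !comp_poly0 subrr dvdp0.
rewrite !comp_polyD !comp_polyM !comp_polyX !comp_polyC.
have -> : (h \Po a) * a + c%:P - ((h \Po b) * b + c%:P) =
   ((h \Po a) - (h \Po b)) * a + (h \Po b) * (a - b) by ring.
by apply: dvdp_add; [apply: dvdp_mulr | apply: dvdp_mull].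
Qed.

Lemma in_qpoly_dvd (F : fieldType) (P p : {poly F}) (mi : monic_irreducible_poly P) :
  P %| p -> in_qpoly P p = 0.
Proof.
move=> H; apply: val_inj => /=.
by rewrite (mk_monicE mi) -(Pdiv.IdomainMonic.modpE mi.2) modp_eq0.
Qed.

Lemma iter_fix (R : pzRingType) (y : R) (q k a : nat) :
  y ^+ (q ^ k)%N = y -> y ^+ (q ^ (a * k))%N = y.
Proof.
move=> H; elim: a => [|a IH]; first by rewrite mul0n expr1.
by rewrite mulSn expnD exprM H IH.
Qed.

Lemma deg_dvd (F : finFieldType) (P : {poly F}) n :
  P \is monic -> irreducible_poly P -> P %| 'X^(#|F| ^ n)%N - 'X ->
  ((size P).-1 %| n)%N.
Proof.
move=> monP irrP hP.
have mi : monic_irreducible_poly P := (irrP, monP).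
set q := #|F|.
have Kn : forall y : {poly %/ P with mi}, y ^+ (q ^ n)%N = y.
  move=> y.
  have hy : in_qpoly P (y : {poly F}) = y.
    by apply: val_inj; exact: (in_qpoly_small (size_mk_monic y)).
  have D : P %| (y : {poly F}) ^+ (q ^ n)%N - (y : {poly F}).
    rewrite frobX; have := dvdp_comp_sub 'X^(q ^ n)%N 'X (y : {poly F}).
    rewrite comp_polyXr => H; exact: dvdp_trans hP H.
  have := in_qpoly_dvd mi D.
  rewrite rmorphB rmorphXn /= hy => /eqP; rewrite subr_eq0 => /eqP; exact.
have Kk : forall y : {poly %/ P with mi}, y ^+ (q ^ (size P).-1)%N = y.
  by move=> y; rewrite -card_qfpoly expf_card.
set k := (size P).-1 in Kk *.
have kgt0 : (0 < k)%N by rewrite /k -subn1 subn_gt0; case: irrP.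
have q1 : (1 < q)%N by apply: finNzRing_gt1.
set r := (n %% k)%N.
have Kr : forall y : {poly %/ P with mi}, y ^+ (q ^ r)%N = y.
  move=> y; have := Kn y.
  by rewrite {1}(divn_eq n k) expnD exprM iter_fix.
rewrite /dvdn; apply/eqP/eqP; apply: contraT => rn0.
have rlt : (r < k)%N by rewrite ltn_mod.
pose pr : {poly {poly %/ P with mi}} := 'X^(q ^ r)%N - 'X.
have q1r : (1 < q ^ r)%N.
  rewrite -{1}(expn0 q) ltn_exp2l // lt0n; exact: rn0.
have spr : size pr = (q ^ r).+1.
  have sX : size ('X^(q ^ r)%N : {poly {poly %/ P with mi}}) = (q ^ r).+1.
    exact: size_polyXn.
  have sX1 : size ('X : {poly {poly %/ P with mi}}) = 2%N by exact: size_polyX.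
  by rewrite /pr size_polyDl sX // size_polyN sX1 ltnS.
have : (size (enum {poly %/ P with mi}) < size pr)%N.
  apply: max_poly_roots; last exact: enum_uniq.
    by rewrite -size_poly_eq0 spr.
  by apply/allP => y _; rewrite /root !hornerE Kr subrr.
rewrite -cardE card_qfpoly spr ltnS leqNgt.
by rewrite ltn_exp2l // rlt.
Qed.

Lemma qnat0 (F : finFieldType) n : (0 < n)%N -> (#|F| ^ n)%:R = 0 :> {poly F}.
Proof.
move=> n0.
have Q1 : (1 < #|F| ^ n)%N.
  by rewrite -{1}(expn0 #|F|) ltn_exp2l ?finNzRing_gt1.
have hp := pnatPpi (qnatX F n) (etrans (pi_pdiv _) Q1).
by apply/eqP; rewrite -(dvdn_pcharf hp) pdiv_dvd.
Qed.

Lemma sqf_G (F : finFieldType) n : (0 < n)%N ->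
  squarefree_poly ('X^(#|F| ^ n)%N - 'X : {poly F}).
Proof.
move=> n0 h /dvdpP [u Hu].
have : h %| ('X^(#|F| ^ n)%N - 'X : {poly F})^`().
  rewrite Hu !derivM; apply: dvdp_add.
    by apply: dvdp_mull; apply: dvdp_mulr.
  by apply: dvdp_mull; apply: dvdp_add; [apply: dvdp_mull | apply: dvdp_mulr].
rewrite derivB derivXn derivX -mulr_natr qnat0 // mulr0 sub0r dvdpNr dvdp1.
by move/eqP->.
Qed.

Lemma irred_eqp (F : fieldType) (p r : {poly F}) :
  p %= r -> irreducible_poly p -> irreducible_poly r.
Proof.
move=> epr [s1 H]; split; first by rewrite -(eqp_size epr).
move=> q sq qr; have qp : q %| p by rewrite (eqp_dvdr _ epr).
exact: (eqp_trans (H _ sq qp) epr).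
Qed.

Lemma monic_assoc (F : fieldType) (p : {poly F}) : p != 0 ->
  exists r, [/\ r \is monic, r %= p & size r = size p].
Proof.
move=> p0; exists ((lead_coef p)^-1 *: p); split.
- by rewrite monicE lead_coefZ mulVf // lead_coef_eq0.
- by rewrite eqp_scale // invr_eq0 lead_coef_eq0.
- by rewrite size_scale // invr_eq0 lead_coef_eq0.
Qed.

Lemma irr_factor (F : fieldType) (p : {poly F}) : (1 < size p)%N ->
  exists r, [/\ r \is monic, irreducible_poly r & r %| p].
Proof.
move: {2}(size p) (leqnn (size p)) => m; elim: m p => [|m IH] p sp sp1.
  by move: (leq_trans sp1 sp).
have p0 : p != 0 by rewrite -size_poly_eq0; case: size sp1.
case: (Classical_Prop.classic (irreducible_poly p)) => Hi.
  have [r [mr er sr]] := monic_assoc p0.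
  exists r; split => //; first by apply: irred_eqp Hi; rewrite eqp_sym.
  by rewrite (eqp_dvdl _ er) dvdpp.
have [q [sq1 qp nqp]] : exists q : {poly F}, [/\ size q != 1%N, q %| p & ~~ (q %= p)].
  apply: Classical_Prop.NNPP => Hn; apply: Hi; split => // q sq qp.
  apply: Classical_Prop.NNPP => nq; apply: Hn; exists q; split => //.
  by apply/negP.
have q0 : q != 0 by apply: contraTneq qp => ->; rewrite dvd0p.
have sqp : (size q < size p)%N.
  by rewrite ltn_neqAle (dvdp_size_eqp qp) nqp dvdp_leq.
have sqm : (size q <= m)%N by rewrite -ltnS (leq_trans sqp sp).
have sq1' : (1 < size q)%N.
  move: sq1; rewrite -size_poly_eq0 in q0; case: (size q) q0 => [|[|]] //.
have [r [mr ir rq]] := IH q sqm sq1'.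
by exists r; split => //; apply: dvdp_trans qp.
Qed.

Lemma factor_bound (F : fieldType) (G : {poly F}) (T : seq {poly F}) :
  G != 0 -> squarefree_poly G -> uniq T ->
  (forall P, P \is monic -> irreducible_poly P -> P %| G -> P \in T) ->
  ((size G).-1 <= \sum_(P <- T) (size P).-1)%N.
Proof.
move: {2}(size G) (leqnn (size G)) => m; elim: m G T => [|m IH] G T sG G0 sqG uT HT.
  by move: sG; rewrite leqn0 => /eqP ->.
case: (leqP (size G) 1) => sG1.
  by have -> : (size G).-1 = 0%N by case: (size G) sG1 => [|[|]].
have [P [mP iP PG]] := irr_factor sG1.
have /dvdpP [u Gu] := PG.
have u0 : u != 0 by apply: contraNneq G0 => u0; rewrite Gu u0 mul0r.
have P0 : P != 0 := irredp_neq0 iP.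
have sP := iP.1.
have nPu : ~~ (P %| u).
  apply/negP => Pu; have := sqG P; rewrite Gu dvdp_mul2r // => /(_ Pu).
  by rewrite leqNgt sP.
have sqU : squarefree_poly u.
  by move=> h hu; apply: sqG; rewrite Gu dvdp_mulr.
have sGu : size G = (size u + size P).-1 by rewrite Gu size_mul.
have PT : P \in T by apply: HT.
rewrite (perm_big _ (perm_to_rem PT)) big_cons /=.
have : ((size u).-1 <= \sum_(i <- rem P T) (size i).-1)%N.
  apply: (IH u) => //.
  - rewrite -ltnS (leq_trans _ sG) // sGu.
    case: (size u) (size P) sP => [|a] [|[|b]] //= _.
    by rewrite addnS ltnS -addSnnS leq_addr.
  - exact: rem_uniq.
  - move=> R mR iR Ru; rewrite (mem_rem_uniq _ uT) inE /=.
    rewrite (HT R mR iR); last by rewrite Gu dvdp_mulr.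
    by rewrite andbT; apply: contraNneq nPu => <-.
move=> H; rewrite sGu.
case: (size u) (size P) sP H => [|a] [|[|b]] //= _ H.
  exact: leq_trans (leqnSn b) (leq_addr _ _).
by rewrite !addnS /= addSn ltnS addnC leq_add2l.
Qed.

Lemma irr_dvd_prod (F : fieldType) (P : {poly F}) (l : seq {poly F}) :
  irreducible_poly P -> (forall Q, Q \in l -> irreducible_poly Q) ->
  P %| \prod_(Q <- l) Q -> exists2 Q, Q \in l & P %= Q.
Proof.
move=> iP; elim: l => [|Q l IH] Hl.
  by rewrite big_nil dvdp1 => /eqP sP; move: iP.1; rewrite sP.
rewrite big_cons => H.
case PQ: (P %| Q).
  exists Q; first by rewrite mem_head.
  apply: (Hl Q (mem_head _ _)) => //.
  by rewrite neq_ltn iP.1 orbT.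
have cPQ : coprimep P Q by rewrite irreducible_poly_coprime // PQ.
rewrite Gauss_dvdpr // in H.
have Hl2 : forall R, R \in l -> irreducible_poly R.
  by move=> R Rl; apply: Hl; rewrite inE Rl orbT.
have [R Rl PR] := IH Hl2 H.
by exists R => //; rewrite inE Rl orbT.
Qed.

Lemma prod_dvd (F : fieldType) (G : {poly F}) (l : seq {poly F}) :
  uniq l -> (forall Q, Q \in l -> [/\ Q \is monic, irreducible_poly Q & Q %| G]) ->
  \prod_(Q <- l) Q %| G.
Proof.
elim: l => [|Q l IH] /=; first by rewrite big_nil dvd1p.
move=> /andP [Ql ul] Hl.
have [mQ iQ QG] := Hl Q (mem_head _ _).
have Hl' : forall R, R \in l -> [/\ R \is monic, irreducible_poly R & R %| G].
  by move=> R Rl; apply: Hl; rewrite inE Rl orbT.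
rewrite big_cons Gauss_dvdp ?QG ?IH //.
rewrite irreducible_poly_coprime //; apply/negP => H.
have Hl2 : forall R, R \in l -> irreducible_poly R.
  by move=> R Rl; have [] := Hl' R Rl.
have [R Rl QR] := irr_dvd_prod iQ Hl2 H.
have [mR _ _] := Hl' R Rl.
by move: QR; rewrite eqp_monic // => /eqP QR; rewrite QR Rl in Ql.
Qed.

Lemma size_prod_monic (F : fieldType) (l : seq {poly F}) :
  (forall Q, Q \in l -> Q \is monic) ->
  size (\prod_(Q <- l) Q) = (\sum_(Q <- l) (size Q).-1).+1.
Proof.
elim: l => [|Q l IH] Hl; first by rewrite !big_nil size_poly1.
rewrite !big_cons mulrC size_Mmonic.
- rewrite IH; last by move=> R Rl; apply: Hl; rewrite inE Rl orbT.
  have := monic_neq0 (Hl Q (mem_head _ _)); rewrite -size_poly_eq0.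
  by case: (size Q) => [|a] //= _; rewrite addnS addnC.
- apply: monic_neq0; rewrite big_seq; apply: monic_prod => R Rl; apply: Hl.
  by rewrite inE Rl orbT.
- exact: Hl Q (mem_head _ _).
Qed.

Lemma arith1 (q u N : nat) : (1 < q)%N -> (2 * N <= u)%N ->
  ((3 * u + 1) * (2 * N + 1) <= q ^ (3 * u))%N.
Proof.
move=> q1 uN.
have h1 : (u.+1 <= 2 ^ u)%N := ltn_expl u (isT : (1 < 2)%N).
have h2 : (2 ^ (3 * u) <= q ^ (3 * u))%N.
  by case: u {uN h1} => [|u]; rewrite ?muln0 ?expn0 // leq_exp2r // muln_gt0.
have h3 : (2 ^ (3 * u) = 2 ^ u * 2 ^ u * 2 ^ u)%N by rewrite mulnC expnM expnS expnS expn1 mulnA.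
rewrite h3 in h2.
have h4 : (u.+1 * u.+1 * u.+1 <= 2 ^ u * 2 ^ u * 2 ^ u)%N.
  by rewrite !leq_mul.
nia.
Qed.

Lemma arith2 (A B m N c : nat) : (0 < m)%N -> (0 < A)%N ->
  (m * (2 * N + 1) <= B)%N -> (c < N)%N -> (A * B <= 2 * m * c + m * A)%N -> False.
Proof. move=> *; nia. Qed.

Lemma sizeG (F : finFieldType) n : (0 < n)%N ->
  size ('X^(#|F| ^ n)%N - 'X : {poly F}) = (#|F| ^ n).+1.
Proof.
move=> n0.
have Q1 : (1 < #|F| ^ n)%N.
  by rewrite -{1}(expn0 #|F|) ltn_exp2l ?finNzRing_gt1.
by rewrite size_polyDl size_polyXn // size_polyN size_polyX ltnS.
Qed.

Lemma deg_le_half (k m : nat) : (0 < m)%N -> (k %| 2 * m)%N -> k != (2 * m)%N -> (k <= m)%N.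
Proof.
move=> m0 /dvdnP [c Hc] kn.
case: c Hc => [|[|c]] Hc; first by move: m0; lia.
  by move: kn; rewrite Hc mul1n eqxx.
nia.
Qed.

Lemma many_irr (F : finFieldType) (N m : nat) : (0 < m)%N ->
  (m * (2 * N + 1) <= #|F| ^ m.-1)%N ->
  exists l : seq {poly F}, [/\ uniq l, size l = N &
    forall Q, Q \in l -> [/\ Q \is monic, irreducible_poly Q,
       Q %| 'X^(#|F| ^ (2 * m))%N - 'X & (size Q).-1 = (2 * m)%N]].
Proof.
move=> m0 hB.
set q := #|F|.
set n := (2 * m)%N.
have n0 : (0 < n)%N by rewrite /n muln_gt0.
set G : {poly F} := 'X^(q ^ n)%N - 'X.
have sG : size G = (q ^ n).+1 by apply: sizeG.
have G0 : G != 0 by rewrite -size_poly_eq0 sG.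
have degG : forall R, R \is monic -> irreducible_poly R -> R %| G ->
    ((size R).-1 %| n)%N := fun R mR iR RG => deg_dvd mR iR RG.
pose T := [seq p <- [seq val p | p <- enum {poly_(n.+1) F}] |
            (p \is monic) && irreducibleb p && (p %| G)].
have uT : uniq T.
  by apply: filter_uniq; rewrite map_inj_uniq ?enum_uniq //; apply: val_inj.
have HT : forall R, R \is monic -> irreducible_poly R -> R %| G -> R \in T.
  move=> R mR iR RG; rewrite mem_filter mR RG andbT /=.
  apply/andP; split; first exact/irreducibleP.
  have sR : (size R <= n.+1)%N.
    have := dvdn_leq n0 (degG R mR iR RG).
    by case: (size R).
  apply/mapP; exists (npolyp n.+1 R); first by rewrite mem_enum.
  by rewrite npolypK.
have fb := factor_bound G0 (@sqf_G F n n0) uT HT.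
rewrite sG /= (bigID (fun P : {poly F} => (size P).-1 == n)) /= in fb.
set S := filter (fun P : {poly F} => (size P).-1 == n) T.
set S' := filter (fun P : {poly F} => (size P).-1 != n) T.
have e1 : (\sum_(P <- T | (size P).-1 == n) (size P).-1 = n * size S)%N.
  rewrite (eq_bigr (fun=> n)); last by move=> P /eqP.
  by rewrite big_const_seq iter_addn_0 size_filter mulnC.
have e2 : (\sum_(P <- T | (size P).-1 != n) (size P).-1 <= m * size S')%N.
  rewrite big_seq_cond (@leq_trans (\sum_(P <- T | (P \in T) && ((size P).-1 != n)) m)) //.
    apply: leq_sum => P /andP [PT Pn].
    move: PT; rewrite mem_filter => /andP [/andP [/andP [mP /irreducibleP iP] PG] _].
    exact: deg_le_half m0 (degG P mP iP PG) Pn.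
  rewrite big_const_seq iter_addn_0 size_filter mulnC.
  rewrite mulnC (@eq_in_count _ _ (fun P : {poly F} => (size P).-1 != n)) //.
  by move=> P PT /=; rewrite PT.
have sS' : (size S' <= q ^ m.+1)%N.
  suff : (size S' <= size [seq val p | p <- enum {poly_(m.+1) F}])%N.
    by rewrite size_map -cardE card_npoly.
  apply: uniq_leq_size; first exact: filter_uniq.
  move=> P; rewrite mem_filter => /andP [Pn PT].
  move: PT; rewrite mem_filter => /andP [/andP [/andP [mP /irreducibleP iP] PG] _].
  have := deg_le_half m0 (degG P mP iP PG) Pn => sP.
  apply/mapP; exists (npolyp m.+1 P); first by rewrite mem_enum.
  by rewrite /= npolypK //; case: (size P) sP.
case: (ltnP (size S) N) => SN.
  exfalso; apply: (@arith2 (q ^ m.+1) (q ^ m.-1) m N (size S)) => //.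
    by rewrite expn_gt0 (ltnW (finNzRing_gt1 F)).
  rewrite -expnD.
  have -> : (m.+1 + m.-1 = n)%N by rewrite /n; move: m0; lia.
  apply: (leq_trans fb); rewrite e1 -/n leq_add //.
  by apply: (leq_trans e2); rewrite leq_mul2l sS' orbT.
exists (take N S); split.
- by apply: take_uniq; apply: filter_uniq.
- by rewrite size_takel.
- move=> Q /mem_take; rewrite mem_filter => /andP [/eqP Qn].
  rewrite mem_filter => /andP [/andP [/andP [mQ /irreducibleP iQ] QG] _].
  by split.
Qed.

Unset Implicit Arguments.

Theorem theorem4p8 (F : finFieldType) (d : nat) (hd : (0 < d)%N) :
  ~ exists s : seq {poly F},
      forall g : {poly F}, g \is monic -> rigid_carmichael d g -> g \in s.
Proof.
move=> [s Hs].
set N := (2 * d`!)%N.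
have N2 : (2 <= N)%N by rewrite /N; have := fact_gt0 d; lia.
set M := (\max_(x <- s) size x)%N.
set u := (M + 2 * N)%N.
set m := (3 * u + 1)%N.
have m0 : (0 < m)%N by rewrite /m addn1.
have hB : (m * (2 * N + 1) <= #|F| ^ m.-1)%N.
  have := @arith1 #|F| u N (finNzRing_gt1 F) (leq_addl _ _).
  by rewrite /m addn1.
have [l [ul sl Hl]] := many_irr m0 hB.
set n := (2 * m)%N.
have n0 : (0 < n)%N by rewrite /n muln_gt0.
set g := \prod_(Q <- l) Q.
have mon : forall Q, Q \in l -> Q \is monic by move=> Q /Hl [].
have mg : g \is monic by rewrite /g big_seq; apply: monic_prod => Q /mon.
have sg : size g = (N * n).+1.
  rewrite /g size_prod_monic // big_seq (eq_bigr (fun=> n)); last by move=> Q /Hl [].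
  by rewrite -big_seq big_const_seq iter_addn_0 count_predT sl mulnC.
have gG : g %| 'X^(#|F| ^ n)%N - 'X by apply: prod_dvd => // Q /Hl [].
case: l ul sl Hl mon @g mg sg gG => [|P0 l'] ul sl Hl mon g mg sg gG.
  by move: N2; rewrite -sl.
have /negP : g \notin s.
  apply/negP => gs; have := @leq_bigmax_seq _ s xpredT (fun x : {poly F} => size x) g gs isT.
  rewrite -/M sg => H.
  have : (M < N * n)%N.
    by rewrite /n /m /u; nia.
  by rewrite ltnNge (leq_trans (leqnSn _) H).
apply; apply: Hs => //.
have [P0m P0i P0G P0n] := Hl P0 (mem_head _ _).
split.
- split; first by rewrite sg ltnS muln_gt0 n0 (leq_trans _ N2).
  move=> ig.
  have P0g : P0 %| g by rewrite /g big_cons dvdp_mulr.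
  have sP0 : size P0 != 1%N.
    by rewrite neq_ltn P0i.1 orbT.
  have := eqp_size (ig P0 sP0 P0g); rewrite sg.
  have := P0i.1; rewrite /n in P0n *; move: N2 m0 P0n.
  case: (size P0) => [|k] //= N2' m0' -> _ [] /eqP; nia.
- by move=> h hh; apply: (@sqf_G F n n0); apply: dvdp_trans gG.
- move=> P iP Pg i hi.
  have [P' [mP' eP sP']] := monic_assoc (irredp_neq0 iP).
  have iP' : irreducible_poly P' by apply: (irred_eqp _ iP); rewrite eqp_sym.
  have P'G : P' %| 'X^(#|F| ^ n)%N - 'X.
    by rewrite (eqp_dvdl _ eP); apply: dvdp_trans gG.
  have kn := deg_dvd mP' iP' P'G.
  rewrite sg /= -sP'.
  apply: dvdn_mull; apply: dvdn_mul kn.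
  by apply: dvdn_mull; apply: dvdn_fact.
Qed.
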